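(* Let $G=(\Gamma,s)$ be a connected rooted graph. The map $c\mapsto \mathbf{deg}-c$ is a bijection from $\mathrm{SR}(G)$ to $\mathrm{PPF}(G)$; equivalently, for a configuration $c:\tilde V\to\mathbb{Z}$, we have $c\in\mathrm{SR}(G)$ if and only if $\mathbf{deg}-c\in\mathrm{PPF}(G)$, where $\mathbf{deg}:\tilde V\to\mathbb{N}$, $v\mapsto\deg(v)$.
   Context: $\mathbb{N}=\{1,2,\dots\}$. A rooted graph $G=(\Gamma,s)$ is a finite undirected multigraph without loops with a distinguished vertex $s$ (the sink), possibly disconnected for subgraphs below; $V$ is its vertex set, $\tilde V=V\setminus\{s\}$. $\mathrm{mult}(vw)$ is the number of edges between $v,w$; $\deg^A(v)=\sum_{w\in A}\mathrm{mult}(vw)$ for $A\subseteq V$, $\deg(v)=\deg^V(v)$. $\mathbf 1_w$ is the indicator function of $w$. Parking side: a $G$-parking function is $p:\tilde V\to\mathbb{N}$ such that for every nonempty $S\subseteq\tilde V$ there is $v\in S$ with $p(v)\le\deg^{V\setminus S}(v)$; $\mathrm{PF}(G)$ is their set. For $A\subseteq\tilde V$, $G^A$ is the induced subgraph on $A\cup\{s\}$ rooted at $s$. For an ordered pair $(A,B)$ of nonempty disjoint sets with $A\cup B=\tilde V$ and $p\in\mathrm{PF}(G)$, $p^A(v)=p(v)$ ($v\in A$) and $p^B(v)=p(v)-\deg^A(v)$ ($v\in B$); $p$ is decomposable w.r.t. $(A,B)$ if $p^A\in\mathrm{PF}(G^A)$ and $p^B\in\mathrm{PF}(G^B)$; $p$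 is prime if it is decomposable w.r.t. no such $(A,B)$; $\mathrm{PPF}(G)$ is the set of prime $G$-parking functions. Sandpile side: a configuration is $c:\tilde V\to\mathbb{Z}$; stable if $c(v)<\deg(v)$ for all $v$. A stable $c$ is recurrent if there is no nonempty $F\subseteq\tilde V$ with $c(v)<\deg^F(v)$ for all $v\in F$; $\mathrm{Rec}(G)$ is their set. $V_M(c)=\{v\in\tilde V: c(v)\ge\deg(v)-\mathrm{mult}(vs)\}$; $c^{v-}=c-\sum_{w\in\tilde V\setminus\{v\}}\mathrm{mult}(ws)\mathbf 1_w$. $c\in\mathrm{Rec}(G)$ is strongly recurrent if $c^{v-}\in\mathrm{Rec}(G)$ for all $v\in V_M(c)$; $\mathrm{SR}(G)$ is their set. *)

(* Defs.v *)
From mathcomp Require Import all_boot all_order all_algebra.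
Set Implicit Arguments. Unset Strict Implicit. Unset Printing Implicit Defensive.
Import Order.TTheory GRing.Theory Num.Theory.
Local Open Scope ring_scope.

(* A rooted multigraph: vertex type V (finite), multiplicity function
   mult : V -> V -> nat (symmetric, loopless), sink s.
   Configurations / parking functions are functions V -> int; only their
   values on the non-sink vertices are ever inspected. *)

Section Sandpile.
Variable V : finType.
Variable mult : V -> V -> nat.
Variable s : V.

Definition adj : rel V := fun x y => (0 < mult x y)%N.

Definition degA (A : {set V}) (v : V) : nat := (\sum_(w in A) mult v w)%N.
Definition deg (v : V) : nat := degA [set: V] v.

Definition nonsink : {set V} := [set v | v != s].

(* p is a parking function of the induced rooted subgraph G^W on W ∪ {s}
   (W ⊆ V \ {s}); p must take values in N = {1,2,...} on W. *)
Definition is_PF (W : {set V}) (p : V -> int) : Prop :=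
  (forall v, v \in W -> 1 <= p v) /\
  (forall S : {set V}, S \subset W -> S != set0 ->
     exists2 v, v \in S & p v <= (degA ((s |: W) :\: S) v)%:Z).

Definition PF (p : V -> int) : Prop := is_PF nonsink p.

Definition pA (p : V -> int) : V -> int := p.
Definition pB (A : {set V}) (p : V -> int) : V -> int :=
  fun v => p v - (degA A v)%:Z.
Definition decomposable (p : V -> int) (A B : {set V}) : Prop :=
  is_PF A (pA p) /\ is_PF B (pB A p).

Definition PPF (p : V -> int) : Prop :=
  PF p /\
  ~ (exists A B : {set V},
        [/\ A != set0, B != set0, [disjoint A & B], A :|: B = nonsink
          & decomposable p A B]).

Definition stable (c : V -> int) : Prop :=
  forall v, v \in nonsink -> c v < (deg v)%:Z.

Definition recurrent (c : V -> int) : Prop :=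
  stable c /\
  ~ (exists F : {set V},
        [/\ F \subset nonsink, F != set0 &
            forall v, v \in F -> c v < (degA F v)%:Z]).

Definition VM (c : V -> int) : {set V} :=
  [set v | (v \in nonsink) && ((deg v)%:Z - (mult v s)%:Z <= c v)].

Definition cminus (c : V -> int) (v : V) : V -> int :=
  fun u => c u - (if (u \in nonsink) && (u != v) then (mult u s)%:Z else 0).

Definition strongly_recurrent (c : V -> int) : Prop :=
  recurrent c /\ forall v, v \in VM c -> recurrent (cminus c v).

End Sandpile.

(* Main.v *)
Require Import Defs.
From mathcomp Require Import all_boot all_order all_algebra.
From mathcomp Require Import zify.
From Stdlib Require Import Classical.
Set Implicit Arguments. Unset Strict Implicit.
Local Open Scope ring_scope.
Import Order.TTheory GRing.Theory Num.Theory.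

Lemma degA_mk (V : finType) (mult : V -> V -> nat) X v :
  degA mult X v = (\sum_w (if w \in X then mult v w else 0))%N.
Proof. by rewrite /degA big_mkcond. Qed.

Lemma degA_eq2 (V : finType) (mult : V -> V -> nat) (X Y Z W : {set V}) v :
  (forall w, (w \in X) + (w \in Y) = (w \in Z) + (w \in W))%N ->
  (degA mult X v + degA mult Y v = degA mult Z v + degA mult W v)%N.
Proof.
move=> H; rewrite !degA_mk -!big_split; apply: eq_bigr => w _ /=.
have := H w.
by case: (w \in X); case: (w \in Y); case: (w \in Z); case: (w \in W) => //= ; lia.
Qed.

Lemma degA0 (V : finType) (mult : V -> V -> nat) v : degA mult set0 v = 0%N.
Proof. by rewrite /degA big_set0. Qed.

Lemma degsplit (V : finType) (mult : V -> V -> nat) (S : {set V}) v :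
  deg mult v = (degA mult S v + degA mult (~: S) v)%N.
Proof.
rewrite /deg -[degA mult setT v]addn0 -(degA0 mult v).
apply: degA_eq2 => w; rewrite !inE; by case: (w \in S).
Qed.

Lemma degA_ge1 (V : finType) (mult : V -> V -> nat) (X : {set V}) w v :
  w \in X -> (mult v w <= degA mult X v)%N.
Proof. by move=> wX; rewrite /degA (bigD1 w) //= leq_addr. Qed.

Lemma degA_mono (V : finType) (mult : V -> V -> nat) (X Y : {set V}) v :
  X \subset Y -> (degA mult X v <= degA mult Y v)%N.
Proof.
move=> sub; have := @degA_eq2 _ mult Y set0 X (Y :\: X) v.
rewrite degA0 addn0 => ->; first exact: leq_addr.
move=> w; move: (subsetP sub w); rewrite !inE.
by case: (w \in X); case: (w \in Y) => //= /(_ isT).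
Qed.

Lemma setT_s (V : finType) (s : V) : s |: nonsink s = setT.
Proof. by apply/setP => x; rewrite !inE; case: eqP. Qed.

Lemma degA1 (V : finType) (mult : V -> V -> nat) (s v : V) :
  degA mult [set s] v = mult v s.
Proof. by rewrite /degA big_set1. Qed.

Lemma degsplit3 (V : finType) (mult : V -> V -> nat) s (A B : {set V}) u :
  [disjoint A & B] -> A :|: B = nonsink s ->
  deg mult u = (degA mult A u + degA mult B u + mult u s)%N.
Proof.
move=> dAB UAB.
have e1 : (degA mult B u + degA mult [set s] u =
           degA mult (B :|: [set s]) u + degA mult set0 u)%N.
  apply: degA_eq2 => w.
  have h1 : (w \in A :|: B) = (w \in nonsink s) by rewrite UAB.
  move: h1 => /=; rewrite !inE.
  by case: (w \in A); case: (w \in B); case: (w == s).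
have e2 : (degA mult setT u + degA mult set0 u =
           degA mult A u + degA mult (B :|: [set s]) u)%N.
  apply: degA_eq2 => w.
  have h1 : (w \in A :|: B) = (w \in nonsink s) by rewrite UAB.
  move/disjoint_setI0: dAB => dAB.
  have h2 : (w \in A :&: B) = (w \in set0) by rewrite dAB.
  move: h1 h2 => /=; rewrite !inE.
  by case: (w \in A); case: (w \in B); case: (w == s).
rewrite degA0 degA1 addn0 in e1; rewrite degA0 addn0 in e2.
by rewrite /deg e2 -e1 addnA.
Qed.

Lemma compl_N (V : finType) (s : V) (S : {set V}) :
  (s |: nonsink s) :\: S = ~: S.
Proof. by rewrite setT_s setTD. Qed.

Lemma rec_PF (V : finType) (mult : V -> V -> nat) (s : V) (c : V -> int) :
  recurrent mult s c <-> PF mult s (fun v => (deg mult v)%:Z - c v).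
Proof.
split.
- move=> [stab noF]; split.
    by move=> v vN; have := stab v vN; lia.
  move=> S SN S0; apply: NNPP => H; apply: noF; exists S; split => //.
  move=> v vS; rewrite ltNge; apply/negP => hle; apply: H; exists v => //.
  rewrite compl_N; have := degsplit mult S v; lia.
- move=> [pos cond]; split.
    by move=> v vN; have := pos v vN; lia.
  move=> [F [FN F0 HF]]; have [v vF hv] := cond F FN F0.
  have := HF v vF; rewrite compl_N in hv; have := degsplit mult F v; lia.
Qed.

Theorem theorem2p11 (V : finType) (mult : V -> V -> nat) (s : V)
  (mult_sym : forall u v, mult u v = mult v u)
  (mult_loopless : forall v, mult v v = 0%N)
  (connected : forall u v, connect (adj mult) u v)
  (c : V -> int) :
  strongly_recurrent mult s c <->
  PPF mult s (fun v => (deg mult v)%:Z - c v).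
Proof.
split.
- move=> [rc hVM]; split; first by apply/rec_PF.
  move=> [A [B [A0 B0 dAB UAB [[_ hA] [hB1 _]]]]].
  have AN : A \subset nonsink s by rewrite -UAB subsetUl.
  have BN : B \subset nonsink s by rewrite -UAB subsetUr.
  have [v vA hv] := hA A (subxx A) A0.
  rewrite /pA /= in hv.
  have sA : s \notin A.
    by apply/negP => sA; have := subsetP AN s sA; rewrite inE eqxx.
  have e1 : (s |: A) :\: A = [set s].
    apply/setP => x; rewrite !inE; case: (eqVneq x s) => [->|] /=.
      by rewrite (negbTE sA).
    by case: (x \in A).
  rewrite e1 degA1 in hv.
  have vVM : v \in VM mult s c.
    rewrite inE (subsetP AN v vA) /=; lia.
  have [_ hnoF] := hVM v vVM; apply: hnoF; exists B; split => // u uB.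
  have uv : u != v.
    apply/eqP => e; subst u; move: dAB; rewrite disjoint_subset.
    by move=> /subsetP /(_ v vA); rewrite inE uB.
  have uN := subsetP BN u uB.
  rewrite /cminus uN uv /=.
  have := hB1 u uB; rewrite /pB /=.
  have := degsplit3 mult u dAB UAB; lia.
- move=> [pf nodec].
  have rc : recurrent mult s c by apply/rec_PF.
  split => // v vVM.
  move: (vVM); rewrite inE => /andP [vN hv].
  split.
    move=> u uN; rewrite /cminus; have := rc.1 u uN.
    by case: ifP => _; lia.
  move=> [F [FN F0 HF]].
  have sF : s \notin F.
    by apply/negP => sF; have := subsetP FN s sF; rewrite inE eqxx.
  have vF : v \notin F.
    apply/negP => vF; have := HF v vF; rewrite /cminus eqxx andbF /=.
    have := degsplit mult F v.
    have : (mult v s <= degA mult (~: F) v)%N by apply: degA_ge1; rewrite inE.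
    lia.
  pose bad := fun B : {set V} => [&& B \subset nonsink s, v \notin B &
     [forall u in B, (c u - (mult u s)%:Z < (degA mult B u)%:Z)]].
  have badF : bad F.
    rewrite /bad FN vF /=; apply/forall_inP => u uF.
    have uv : u != v by apply/eqP => e; move: vF; rewrite -e uF.
    by have := HF u uF; rewrite /cminus (subsetP FN u uF) uv.
  case: (@arg_maxnP _ F bad (fun B => #|B|) badF) => M badM maxM.
  move: (badM) => /and3P [MN vM /forall_inP hM].
  set A := nonsink s :\: M.
  have dAM : [disjoint A & M].
    by rewrite disjoint_subset; apply/subsetP => x; rewrite !inE => /andP[].
  have UAM : A :|: M = nonsink s.
    apply/setP => x; rewrite !inE; move: (subsetP MN x); rewrite !inE.
    by case: (x \in M); case: (x == s) => //= /(_ isT).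
  apply: nodec; exists A, M; split => //.
  + by apply/set0Pn; exists v; rewrite in_setD vM vN.
  + rewrite -card_gt0; apply: leq_trans (maxM F badF); by rewrite card_gt0.
  + split.
    * split.
        move=> u; rewrite in_setD => /andP [_ uN]; exact: pf.1 u uN.
      move=> T TA T0; apply: NNPP => hT.
      have hT' : forall u, u \in T ->
          (degA mult ((s |: A) :\: T) u)%:Z < (deg mult u)%:Z - c u.
        move=> u uT; rewrite ltNge; apply/negP => h; apply: hT; by exists u.
      have sT : s \notin T.
        apply/negP => sT; have := subsetP TA s sT; by rewrite !inE eqxx andbF.
      have vT : v \notin T.
        apply/negP => vT; have h1 := hT' v vT.
        have h2 : (mult v s <= degA mult ((s |: A) :\: T) v)%N.
          by apply: degA_ge1; rewrite !inE eqxx sT.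
        clear -h1 h2 hv; lia.
      have badMT : bad (M :|: T).
        rewrite /bad subUset MN (subset_trans TA (subsetDl _ _)) /=.
        rewrite in_setU negb_or vM vT /=.
        apply/forall_inP => u; rewrite in_setU => /orP [uM|uT].
          have h1 := hM u uM.
          have h2 : (degA mult M u <= degA mult (M :|: T) u)%N.
            by apply: degA_mono; exact: subsetUl.
          clear -h1 h2; lia.
        have h1 := hT' u uT; have h2 := degsplit mult (M :|: T) u.
        have e : ~: (M :|: T) = (s |: A) :\: T.
          apply/setP => x; rewrite !inE.
          move: (subsetP TA x) (subsetP MN x); rewrite !inE.
          by case: (x \in M); case: (x \in T); case: (x == s) => //= ;
             try (move=> /(_ isT)); try (move=> _ /(_ isT)).
        rewrite e in h2; clear -h1 h2; lia.
      have hle := maxM (M :|: T) badMT; move: hle; rewrite cardsU.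
      have -> : M :&: T = set0.
        apply/setP => x; rewrite !inE; move: (subsetP TA x); rewrite !inE.
        by case: (x \in M); case: (x \in T) => //= /(_ isT).
      rewrite cards0 subn0 => hle; move: T0; rewrite -card_gt0 => hT0.
      by move: hle; clear -hT0; lia.
    * split.
        move=> u uM; rewrite /pB /pA; have h1 := hM u uM.
        have h2 := degsplit3 mult u dAM UAM; clear -h1 h2; lia.
      move=> S SM S0.
      have [u uS hu] := pf.2 S (subset_trans SM MN) S0.
      exists u => //; rewrite /pB /pA; rewrite compl_N in hu.
      have e : (degA mult (~: S) u + degA mult set0 u =
                degA mult A u + degA mult ((s |: M) :\: S) u)%N.
        apply: degA_eq2 => x; rewrite !inE.
        move: (subsetP SM x) (subsetP MN x); rewrite !inE.
        by case: (x \in M); case: (x \in S); case: (x == s) => //= ;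
             try (move=> /(_ isT)); try (move=> _ /(_ isT)).
      rewrite degA0 addn0 in e; clear -e hu; lia.
Qed.
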